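(* Let $(X,\preceq,T)$ be a complete quasi-total triple, let $x_0\in X$ and set $H_n:=\{x\in X: x\succeq T^n.x_0\}$ for $n\in\mathbb{Z}$. Then $(X,\preceq,\{H_n\})$ is a half-space order. Moreover, if a group $G$ acts dominatingly and effectively by automorphisms on $(X,\preceq,T)$, then it acts unboundedly and by quasi-automorphisms on $(X,\preceq,\{H_n\})$; in particular, the order induced by $\preceq$ on $G$ is a quasi-total order.
   Context: For a poset $(X,\preceq)$, an order-preserving bijection $T$ of $X$ is dominant if for all $a,b\in X$ there is $n\in\mathbb{N}$ with $T^na\succ b$. A quasi-total triple is $(X,\preceq,T)$ with $(X,\preceq)$ a poset and $T$ a dominant order-preserving bijection such that there is $N\in\mathbb{N}$ with: for all $a,b\in X$ there exists $k\in\{0,\dots,N\}$ with $a\preceq T^kb$ or $b\preceq T^ka$. It is complete if $a\preceq Ta$ for all $a$. An action of $G$ on $(X,\preceq,T)$ by automorphisms is an action by order-preserving bijections commuting with $T$; it is dominating if moreover there exist $g\in G$, $x\in X$, $n\in\mathbb{N}$ with $g.x\succeq T^n.x$. A half-space filtration of $X$: subsets $\{H_n\}_{n\in\mathbb{Z}}$ with $H_{n+1}\subsetneq H_n$, $\bigcap H_n=\emptyset$, $\bigcup H_n=X$; height $h(a)=\sup\{n: a\in H_n\}$, $h(a,b)=h(a)-h(b)$. $(X,\preceq,\{H_n\})$ is a half-space order if $(X,\preceq)$ is a poset, $\{H_n\}$ is a half-space filtration and for some $w$, $h(a,b)\geq w\Rightarrow a\succeq b$. A $G$-action is by quasi-automorphisms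 if for some $d$, $|h(ga,gb)-h(a,b)|\leq d$ for all $g,a,b$; unbounded if for some $g,a$, $h(g^na)\to\pm\infty$ as $n\to\pm\infty$. For an effective action, the induced order on $G$ is $g\leq h\Leftrightarrow\forall k\in G\,\forall x:(kg).x\preceq(kh).x$. A quasi-total order is an order on $G$ induced by an effective, unbounded action by quasi-automorphisms on a half-space order. *)

(* Defs.v *)
From Stdlib Require Import ZArith Lia.
Open Scope Z_scope.

Section Defs.
Context {X : Type}.

Definition is_poset (le : X -> X -> Prop) : Prop :=
  (forall a, le a a) /\
  (forall a b, le a b -> le b a -> a = b) /\
  (forall a b c, le a b -> le b c -> le a c).

Definition strict (le : X -> X -> Prop) (a b : X) : Prop := le a b /\ a <> b.

Definition bij_with (T Tinv : X -> X) : Prop :=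
  (forall x, Tinv (T x) = x) /\ (forall x, T (Tinv x) = x).

Definition order_preserving (le : X -> X -> Prop) (f : X -> X) : Prop :=
  forall a b, le a b -> le (f a) (f b).

Definition Tz (T Tinv : X -> X) (n : Z) (x : X) : X :=
  match n with
  | Z0 => x
  | Zpos p => Nat.iter (Pos.to_nat p) T x
  | Zneg p => Nat.iter (Pos.to_nat p) Tinv x
  end.

Definition dominant (le : X -> X -> Prop) (T : X -> X) : Prop :=
  forall a b, exists n : nat, strict le b (Nat.iter n T a).

Definition quasi_total_triple (le : X -> X -> Prop) (T Tinv : X -> X) : Prop :=
  is_poset le /\ bij_with T Tinv /\ order_preserving le T /\ dominant le T /\
  exists N : nat, forall a b, exists k : nat, (k <= N)%nat /\
     (le a (Nat.iter k T b) \/ le b (Nat.iter k T a)).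

Definition complete_triple (le : X -> X -> Prop) (T : X -> X) : Prop :=
  forall a, le a (T a).

Definition half_space_filtration (H : Z -> X -> Prop) : Prop :=
  (forall n x, H (n + 1) x -> H n x) /\
  (forall n, exists x, H n x /\ ~ H (n + 1) x) /\
  (forall x, ~ (forall n, H n x)) /\
  (forall x, exists n, H n x).

(* h(a) = m, i.e. m = sup {n | a in H_n} (for a filtration, the sup is
   attained and is the unique m with a in H_m and a notin H_(m+1)) *)
Definition height (H : Z -> X -> Prop) (a : X) (m : Z) : Prop :=
  H m a /\ ~ H (m + 1) a.

Definition half_space_order (le : X -> X -> Prop) (H : Z -> X -> Prop) : Prop :=
  is_poset le /\ half_space_filtration H /\
  exists w : Z, forall a b ma mb, height H a ma -> height H b mb ->
     ma - mb >= w -> le b a.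

End Defs.

Definition is_group {G : Type} (mul : G -> G -> G) (one : G) (inv : G -> G) : Prop :=
  (forall a b c, mul a (mul b c) = mul (mul a b) c) /\
  (forall a, mul one a = a) /\ (forall a, mul a one = a) /\
  (forall a, mul (inv a) a = one) /\ (forall a, mul a (inv a) = one).

Definition is_action {G X : Type} (mul : G -> G -> G) (one : G)
  (act : G -> X -> X) : Prop :=
  (forall x, act one x = x) /\ (forall g h x, act (mul g h) x = act g (act h x)).

Definition effective_action {G X : Type} (one : G) (act : G -> X -> X) : Prop :=
  forall g, (forall x, act g x = x) -> g = one.

Definition action_by_automorphisms {G X : Type} (le : X -> X -> Prop) (T : X -> X)
  (act : G -> X -> X) : Prop :=
  forall g, order_preserving le (act g) /\ (forall x, act g (T x) = T (act g x)).

Definition dominating_action {G X : Type} (le : X -> X -> Prop) (T : X -> X)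
  (act : G -> X -> X) : Prop :=
  exists g x (n : nat), (1 <= n)%nat /\ le (Nat.iter n T x) (act g x).

Definition quasi_automorphism_action {G X : Type} (H : Z -> X -> Prop)
  (act : G -> X -> X) : Prop :=
  exists d : Z, forall g a b ma mb mga mgb,
    height H a ma -> height H b mb ->
    height H (act g a) mga -> height H (act g b) mgb ->
    Z.abs ((mga - mgb) - (ma - mb)) <= d.

Definition gpow {G : Type} (mul : G -> G -> G) (one : G) (inv : G -> G)
  (g : G) (n : Z) : G :=
  match n with
  | Z0 => one
  | Zpos p => Nat.iter (Pos.to_nat p) (mul g) one
  | Zneg p => Nat.iter (Pos.to_nat p) (mul (inv g)) one
  end.

Definition unbounded_action {G X : Type} (mul : G -> G -> G) (one : G) (inv : G -> G)
  (H : Z -> X -> Prop) (act : G -> X -> X) : Prop :=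
  exists g a,
    (forall M, exists N, forall n m, n >= N ->
        height H (act (gpow mul one inv g n) a) m -> m >= M) /\
    (forall M, exists N, forall n m, n <= N ->
        height H (act (gpow mul one inv g n) a) m -> m <= M).

Definition induced_order {G X : Type} (mul : G -> G -> G) (le : X -> X -> Prop)
  (act : G -> X -> X) (g h : G) : Prop :=
  forall k x, le (act (mul k g) x) (act (mul k h) x).

Definition quasi_total_order {G : Type} (mul : G -> G -> G) (one : G) (inv : G -> G)
  (R : G -> G -> Prop) : Prop :=
  exists (Y : Type) (leY : Y -> Y -> Prop) (HY : Z -> Y -> Prop) (actY : G -> Y -> Y),
    half_space_order leY HY /\ is_action mul one actY /\
    effective_action one actY /\ unbounded_action mul one inv HY actY /\
    quasi_automorphism_action HY actY /\
    (forall g h, R g h <-> induced_order mul leY actY g h).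

(* Main.v *)
Require Import Defs.
From Stdlib Require Import ZArith Lia Classical.
Open Scope Z_scope.

Lemma Tz_nat {X} (T Tinv : X -> X) (k : nat) x : Tz T Tinv (Z.of_nat k) x = Nat.iter k T x.
Proof. destruct k; [reflexivity|]. simpl. rewrite SuccNat2Pos.id_succ. reflexivity. Qed.

Lemma Tz_negnat {X} (T Tinv : X -> X) (k : nat) x : Tz T Tinv (- Z.of_nat k) x = Nat.iter k Tinv x.
Proof. destruct k; [reflexivity|]. simpl. rewrite SuccNat2Pos.id_succ. reflexivity. Qed.

Lemma Tz_succ {X} (T Tinv : X -> X) : bij_with T Tinv ->
  forall n x, Tz T Tinv (n+1) x = T (Tz T Tinv n x).
Proof.
  intros [h1 h2] n x. destruct (Z_le_gt_dec 0 n).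
  - replace n with (Z.of_nat (Z.to_nat n)) by lia.
    replace (Z.of_nat (Z.to_nat n) + 1) with (Z.of_nat (S (Z.to_nat n))) by lia.
    rewrite !Tz_nat. reflexivity.
  - replace n with (- Z.of_nat (S (Z.to_nat (-n - 1)))) by lia.
    replace (- Z.of_nat (S (Z.to_nat (-n-1))) + 1) with (- Z.of_nat (Z.to_nat (-n-1))) by lia.
    rewrite !Tz_negnat. simpl. rewrite h2. reflexivity.
Qed.

Lemma Tz_pred {X} (T Tinv : X -> X) : bij_with T Tinv ->
  forall n x, Tz T Tinv (n-1) x = Tinv (Tz T Tinv n x).
Proof.
  intros hb n x. pose proof (Tz_succ T Tinv hb (n-1) x) as e.
  replace (n-1+1) with n in e by lia. rewrite e. destruct hb as [h1 h2]. rewrite h1. reflexivity.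
Qed.

Lemma Tz_add {X} (T Tinv : X -> X) : bij_with T Tinv ->
  forall a b x, Tz T Tinv (a + b) x = Tz T Tinv a (Tz T Tinv b x).
Proof.
  intros hb a b x. induction a using Z.peano_ind.
  - reflexivity.
  - replace (Z.succ a + b) with ((a+b)+1) by lia. unfold Z.succ.
    rewrite !Tz_succ by assumption. congruence.
  - replace (Z.pred a + b) with ((a+b)-1) by lia. unfold Z.pred.
    replace (a + -1) with (a - 1) by lia.
    rewrite !Tz_pred by assumption. congruence.
Qed.

Lemma iter_mono {X} (le : X -> X -> Prop) (f : X -> X) :
  order_preserving le f -> forall k, order_preserving le (Nat.iter k f).
Proof. intros h k; induction k; intros a b hab; simpl; auto. Qed.

Lemma iter_comm {X} (f g : X -> X) : (forall x, f (g x) = g (f x)) ->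
  forall k x, f (Nat.iter k g x) = Nat.iter k g (f x).
Proof. intros h k; induction k; intros x; simpl; auto. rewrite h, IHk; auto. Qed.

Lemma iterTz0 {X} (T Tinv : X -> X) k w : Nat.iter k T w = Tz T Tinv (Z.of_nat k) w.
Proof. rewrite Tz_nat; reflexivity. Qed.

Lemma iter_ge {X} (le : X -> X -> Prop) (T : X -> X) :
  (forall a, le a a) -> (forall a b c, le a b -> le b c -> le a c) ->
  (forall a, le a (T a)) -> forall k y, le y (Nat.iter k T y).
Proof. intros hr ht hc k; induction k; intros y; simpl; eauto. Qed.

Theorem proposition1p6 (X : Type) (le : X -> X -> Prop) (T Tinv : X -> X)
  (hqt : quasi_total_triple le T Tinv) (hc : complete_triple le T) (x0 : X) :
  let H := fun (n : Z) (x : X) => le (Tz T Tinv n x0) x in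
  half_space_order le H /\
  (forall (G : Type) (mul : G -> G -> G) (one : G) (inv : G -> G)
          (act : G -> X -> X),
     is_group mul one inv -> is_action mul one act ->
     action_by_automorphisms le T act -> dominating_action le T act ->
     effective_action one act ->
     unbounded_action mul one inv H act /\
     quasi_automorphism_action H act /\
     quasi_total_order mul one inv (induced_order mul le act)).
Proof.
  intros H.
  destruct hqt as (hpo & hb & hTp & hdom & N & hqN).
  pose proof hpo as (hrefl & hanti & htrans).
  set (NN := Z.of_nat N).
  assert (iterge := iter_ge le T hrefl htrans hc).
  assert (Tzle : forall i j y, i <= j -> le (Tz T Tinv i y) (Tz T Tinv j y)).
  { intros i j y hij. replace j with (Z.of_nat (Z.to_nat (j - i)) + i) by lia.
    rewrite Tz_add, Tz_nat by assumption. apply iterge. }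
  assert (orbit : forall i j, le (Tz T Tinv i x0) (Tz T Tinv j x0) -> i <= j).
  { intros i j hij. destruct (Z_le_gt_dec i j) as [|hlt]; [assumption|exfalso].
    set (z := Tz T Tinv j x0).
    set (d := Z.to_nat (i - j)).
    assert (ez : Nat.iter d T z = z).
    { apply hanti.
      - unfold z, d. rewrite (iterTz0 T Tinv), <- Tz_add by assumption.
        replace (Z.of_nat (Z.to_nat (i - j)) + j) with i by lia. exact hij.
      - apply iterge. }
    assert (em : forall m, Nat.iter (d * m) T z = z).
    { intros m; induction m. { rewrite Nat.mul_0_r. reflexivity. }
      replace (d * S m)%nat with (d + d * m)%nat by lia.
      rewrite Nat.iter_add, IHm. exact ez. }
    destruct (hdom z z) as [n [hn1 hn2]].
    apply hn2. apply hanti; [exact hn1|].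
    rewrite <- (em n) at 2.
    replace (d * n)%nat with ((d * n - n) + n)%nat by nia.
    rewrite Nat.iter_add. apply iterge. }
  assert (Hdown : forall p q y, H p y -> q <= p -> H q y).
  { intros p q y hp hq. unfold H in *. eapply htrans; [apply Tzle, hq|exact hp]. }
  assert (iterTz : forall k w, Nat.iter k T w = Tz T Tinv (Z.of_nat k) w).
  { intros; rewrite Tz_nat; reflexivity. }
  assert (F3 : forall u y, ~ H u y -> le y (Tz T Tinv (u + 2 * NN) x0)).
  { intros u y hu. destruct (hqN (Tz T Tinv u x0) (Tz T Tinv (-NN) y)) as (k & hk & [h|h]).
    - exfalso. apply hu. unfold H. eapply htrans; [exact h|].
      rewrite iterTz, <- Tz_add by assumption.
      replace y with (Tz T Tinv 0 y) at 2 by reflexivity. apply Tzle. unfold NN; lia.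
    - rewrite iterTz, <- Tz_add in h by assumption.
      apply (iter_mono le T hTp N) in h. rewrite !iterTz, <- !Tz_add in h by assumption.
      replace (Z.of_nat N + - NN) with 0 in h by (unfold NN; lia).
      simpl in h. eapply htrans; [exact h|]. apply Tzle. unfold NN; lia. }
  assert (exH : forall y, exists p, H p y).
  { intros y. destruct (hdom (Tz T Tinv (-NN) y) x0) as [n [hn1 hn2]].
    exists (-NN - Z.of_nat n).
    destruct (hqN (Tz T Tinv (-NN - Z.of_nat n) x0) (Tz T Tinv (-NN) y)) as (k & hk & [h|h]).
    - unfold H. eapply htrans; [exact h|].
      rewrite iterTz, <- Tz_add by assumption.
      replace y with (Tz T Tinv 0 y) at 2 by reflexivity. apply Tzle. unfold NN; lia.
    - exfalso. rewrite iterTz, <- Tz_add in h by assumption.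
      assert (h' : le (Tz T Tinv (-NN) y) (Tz T Tinv (- Z.of_nat n) x0)).
      { eapply htrans; [exact h|]. apply Tzle. unfold NN; lia. }
      apply (iter_mono le T hTp n) in h'.
      rewrite (iterTz n (Tz T Tinv (- Z.of_nat n) x0)), <- Tz_add in h' by assumption.
      replace (Z.of_nat n + - Z.of_nat n) with 0 in h' by lia. simpl in h'.
      apply hn2. apply hanti; assumption. }
  assert (exnH : forall y, exists u, ~ H u y).
  { intros y. destruct (hdom x0 y) as [n [hn1 hn2]]. exists (Z.of_nat n).
    intro hH. unfold H in hH. rewrite Tz_nat in hH. apply hn2. apply hanti; assumption. }
  assert (exh : forall y, exists m, height H y m).
  { intros y. destruct (exH y) as [p hp]. destruct (exnH y) as [u hu].
    assert (gen : forall k p, H p y -> ~ H (p + Z.of_nat k) y -> exists m, height H y m).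
    { intros k; induction k; intros p' hp' hn'.
      - exfalso. apply hn'. replace (p' + Z.of_nat 0) with p' by lia. exact hp'.
      - destruct (classic (H (p' + 1) y)) as [h1|h1].
        + apply (IHk (p' + 1)); [exact h1|]. replace (p' + 1 + Z.of_nat k) with (p' + Z.of_nat (S k)) by lia. exact hn'.
        + exists p'. split; assumption. }
    destruct (Z_le_gt_dec u p) as [hle|hgt].
    - exfalso. apply hu. apply (Hdown p); assumption.
    - apply (gen (Z.to_nat (u - p)) p hp). replace (p + Z.of_nat (Z.to_nat (u - p))) with u by lia. exact hu. }

  set (C := 1 + 2 * NN).
  assert (hmono : forall u v mu mv, le u v -> height H u mu -> height H v mv -> mu <= mv).
  { intros u v mu mv huv [hu1 hu2] [hv1 hv2].
    destruct (Z_le_gt_dec mu mv) as [|hg]; [assumption|exfalso].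
    apply hv2. apply (Hdown mu); [|lia]. unfold H in *. eauto. }
  assert (hlow : forall q y m, le (Tz T Tinv q x0) y -> height H y m -> q <= m).
  { intros q y m hq [h1 h2]. destruct (Z_le_gt_dec q m) as [|hg]; [assumption|exfalso].
    apply h2. apply (Hdown q); [exact hq|lia]. }
  assert (hup : forall q y m, le y (Tz T Tinv q x0) -> height H y m -> m <= q).
  { intros q y m hq [h1 h2]. apply orbit. eauto. }
  assert (hsand : forall y m, height H y m -> le y (Tz T Tinv (m + C) x0)).
  { intros y m [h1 h2]. apply F3 in h2. unfold C. replace (m + (1 + 2 * NN)) with (m + 1 + 2 * NN) by lia.
    exact h2. }
  assert (shiftnat : forall k y my m', height H y my -> height H (Nat.iter k T y) m' ->
            my + Z.of_nat k <= m' <= my + Z.of_nat k + C).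
  { intros k y my m' hy hm. split.
    - apply (hlow _ (Nat.iter k T y)); [|exact hm].
      replace (my + Z.of_nat k) with (Z.of_nat k + my) by lia.
      rewrite Tz_add, <- iterTz by assumption. apply iter_mono; [exact hTp|]. apply hy.
    - apply (hup _ (Nat.iter k T y)); [|exact hm].
      replace (my + Z.of_nat k + C) with (Z.of_nat k + (my + C)) by lia.
      rewrite Tz_add, <- iterTz by assumption. apply iter_mono; [exact hTp|]. apply hsand, hy. }
  assert (shiftZ : forall k y my m', height H y my -> height H (Tz T Tinv k y) m' ->
            my + k - C <= m' <= my + k + C).
  { intros k y my m' hy hm. destruct (Z_le_gt_dec 0 k) as [hk|hk].
    - replace k with (Z.of_nat (Z.to_nat k)) in hm |- * by lia. rewrite Tz_nat in hm.
      pose proof (shiftnat _ _ _ _ hy hm). unfold C in *; lia.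
    - assert (e : Nat.iter (Z.to_nat (- k)) T (Tz T Tinv k y) = y).
      { rewrite iterTz, <- Tz_add by assumption. replace (Z.of_nat (Z.to_nat (- k)) + k) with 0 by lia.
        reflexivity. }
      pose proof (shiftnat (Z.to_nat (-k)) _ _ _ hm (eq_ind_r (fun w => height H w my) hy e)).
      unfold C in *; lia. }
  assert (HSO : half_space_order le H).
  { split; [exact hpo|]. split.
    - split; [|split; [|split]].
      + intros n x hx. apply (Hdown (n+1)); [exact hx|lia].
      + intros n. exists (Tz T Tinv n x0). split; [apply hrefl|].
        intro h. apply orbit in h. lia.
      + intros x hall. destruct (exnH x) as [u hu]. exact (hu (hall u)).
      + exact exH.
    - exists C. intros a b ma mb ha hb' hw.
      eapply htrans; [apply hsand, hb'|]. eapply htrans; [|apply ha].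
      apply Tzle. lia. }
  split; [exact HSO|].
  intros G mul one inv act hg hact haut hdomg heff.
  destruct hact as [ha1 ha2].
  assert (gcommT : forall g y, act g (T y) = T (act g y)) by (intros; apply haut).
  assert (gmono : forall g u v, le u v -> le (act g u) (act g v)) by (intros; apply haut; assumption).
  assert (gcomm : forall g k y, act g (Tz T Tinv k y) = Tz T Tinv k (act g y)).
  { intros g k y. assert (ginv : forall w, act g (Tinv w) = Tinv (act g w)).
    { intros w. destruct hb as [hb1 hb2].
      rewrite <- (hb1 (act g (Tinv w))), <- gcommT, hb2. reflexivity. }
    induction k using Z.peano_ind.
    - reflexivity.
    - unfold Z.succ. rewrite !Tz_succ by assumption. rewrite gcommT. congruence.
    - unfold Z.pred. replace (k + -1) with (k - 1) by lia.
      rewrite !Tz_pred by assumption. rewrite ginv. congruence. }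
  assert (UB : unbounded_action mul one inv H act).
  { destruct hdomg as (g & x & n & hn1 & hgx).
    destruct (exH x) as [p hp]. destruct (exnH x) as [u hu].
    exists g, x. split.
    - assert (P : forall k, le (Nat.iter n T (act (Nat.iter k (mul g) one) x))
                               (act (mul g (Nat.iter k (mul g) one)) x)).
      { intros k; induction k.
        - simpl. rewrite ha2, ha1. exact hgx.
        - simpl. set (gk := Nat.iter k (mul g) one) in *.
          rewrite (ha2 g gk), (ha2 g (mul g gk)).
          rewrite <- (iter_comm (act g) T (gcommT g)).
          apply gmono. exact IHk. }
      assert (Q : forall k, H (p + Z.of_nat n * Z.of_nat k) (act (Nat.iter k (mul g) one) x)).
      { intros k; induction k.
        - simpl. rewrite ha1. replace (p + Z.of_nat n * 0) with p by lia. exact hp.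
        - unfold H in *. replace (p + Z.of_nat n * Z.of_nat (S k)) with (Z.of_nat n + (p + Z.of_nat n * Z.of_nat k)) by lia.
          rewrite Tz_add, <- iterTz by assumption.
          eapply htrans; [apply iter_mono; [exact hTp|exact IHk]|]. apply P. }
      intros M. exists (Z.max 1 (M - p)). intros n' m hn' hm.
      destruct n' as [|q|q]; try lia. simpl in hm.
      pose proof (hlow _ _ _ (Q (Pos.to_nat q)) hm). rewrite positive_nat_Z in *. nia.
    - set (h := inv g).
      assert (hhg : forall w, act h (act g w) = w).
      { intros w. rewrite <- ha2. unfold h. destruct hg as (_ & _ & _ & hi & _). rewrite hi. apply ha1. }
      assert (P : forall k, le (Nat.iter n T (act (mul h (Nat.iter k (mul h) one)) x))
                               (act (Nat.iter k (mul h) one) x)).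
      { intros k; induction k.
        - simpl. rewrite ha2, !ha1. rewrite <- (iter_comm (act h) T (gcommT h)).
          rewrite <- (hhg x) at 2. apply gmono. exact hgx.
        - simpl. set (hk := Nat.iter k (mul h) one) in *.
          rewrite (ha2 h (mul h hk)), (ha2 h hk).
          rewrite <- (iter_comm (act h) T (gcommT h)).
          apply gmono. rewrite <- ha2. exact IHk. }
      assert (Q : forall k, ~ H (u - Z.of_nat n * Z.of_nat k) (act (Nat.iter k (mul h) one) x)).
      { intros k; induction k.
        - simpl. rewrite ha1. replace (u - Z.of_nat n * 0) with u by lia. exact hu.
        - intro hH. apply IHk. unfold H in *.
          replace (u - Z.of_nat n * Z.of_nat k) with (Z.of_nat n + (u - Z.of_nat n * Z.of_nat (S k))) by lia.
          rewrite Tz_add, <- iterTz by assumption.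
          eapply htrans; [apply iter_mono; [exact hTp|exact hH]|]. apply P. }
      intros M. exists (Z.min (-1) (M - u)). intros n' m hn' hm.
      destruct n' as [|q|q]; try lia. simpl in hm.
      destruct (Z_le_gt_dec (u - Z.of_nat n * Z.of_nat (Pos.to_nat q)) m) as [hge|hlt].
      + exfalso. apply (Q (Pos.to_nat q)). apply (Hdown m); [apply hm|exact hge].
      + rewrite positive_nat_Z in hlt. assert (Z.neg q = - Z.pos q) by reflexivity. nia. }
  assert (QA : quasi_automorphism_action H act).
  { exists (3 * C). intros g a b ma mb mga mgb hA hB hGA hGB.
    destruct (exh (act g x0)) as [hz hhz].
    assert (key : forall a ma mga, height H a ma -> height H (act g a) mga ->
               ma + hz - C <= mga <= ma + hz + 2 * C).
    { intros a' ma' mga' h1 h2. split.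
      - destruct (exh (Tz T Tinv ma' (act g x0))) as [h3 hh3].
        pose proof (shiftZ _ _ _ _ hhz hh3).
        assert (h3 <= mga'); [|lia].
        apply (hmono _ _ _ _ (gmono g _ _ (proj1 h1))); [|exact h2].
        rewrite gcomm. exact hh3.
      - destruct (exh (Tz T Tinv (ma' + C) (act g x0))) as [h3 hh3].
        pose proof (shiftZ _ _ _ _ hhz hh3).
        assert (mga' <= h3); [|lia].
        apply (hmono _ _ _ _ (gmono g _ _ (hsand _ _ h1))); [exact h2|].
        rewrite gcomm. exact hh3. }
    pose proof (key _ _ _ hA hGA). pose proof (key _ _ _ hB hGB).
    apply Z.abs_le. lia. }
  split; [exact UB|]. split; [exact QA|].
  exists X, le, H, act. split.
  { exact HSO. }
  split; [split; assumption|]. split; [exact heff|]. split; [exact UB|]. split; [exact QA|].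
  intros; reflexivity.
Qed.
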